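(* Let $\mathcal{N}$ be a Beeping Network with $n$ nodes and maximum degree $\Delta$, where each node has a unique ID from $[1,n^c]$ for a constant $c\ge1$ and each node knows $n$, $c$ and $\Delta$. There is a deterministic distributed algorithm (for the Beeping Network) that simulates any single round of any algorithm designed for the CONGEST model: if each node $u$ holds, for each neighbor $v\in N(u)$, a (possibly different) message $m_{u,v}$ of $O(\log n)$ bits, then after $O(\Delta^2\,\mathrm{polylog}\, n\,\log\Delta)$ beeping rounds, for every $u$ and every $v\in N(u)$, the node $v$ knows $m_{u,v}$ together with the ID of $u$. Here $\mathrm{polylog}\, n$ is a fixed polylogarithmic function of $n$.
   Context: A Beeping Network is a network of $n$ nodes whose topology is an undirected graph $G=(V,E)$; $N(v)$ is the neighbor set of $v$. Time is divided into synchronous rounds and all nodes start simultaneously. In each round every node either beeps or listens; a listening node hears ''silence'' if no neighbor beeps and ''noise'' if at least one neighbor beeps, and cannot distinguish one beep from several. The algorithm may be adaptive (decisions can depend on the silence/noise feedback heard so far). In the CONGEST model, in each round each node can send a possibly different message of $O(\log n)$ bits to each neighbor, and all such messages are received without collisions. *)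

(* Defs.v *)
From mathcomp Require Import all_boot all_order.
Set Implicit Arguments. Unset Strict Implicit. Unset Printing Implicit Defensive.

Definition lg (x : nat) : nat := (trunc_log 2 x).+1.

(* A node's local input: a partial map from IDs to messages (None = no message). *)
Definition msgmap := nat -> option nat.

(* A deterministic beeping protocol (for fixed known parameters n, c, Delta).
   In every round a node decides whether to beep, as a function of its own ID,
   its local input and the feedback history heard so far (adaptivity).
   At the end, it outputs a partial map ID -> message, computed from the same data. *)
Record beep_protocol := BeepProtocol {
  bp_act : nat -> msgmap -> seq bool -> bool;
  bp_out : nat -> msgmap -> seq bool -> msgmap }.

Section Exec.
Variables (n : nat) (adj : rel 'I_n) (id : 'I_n -> nat) (inp : 'I_n -> msgmap)
          (P : beep_protocol).

(* feedback histories after t rounds; a history entry is true iff the node listened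
   in that round and heard noise (at least one neighbour beeped); a beeping node
   records false (it hears nothing; its own beeps are recomputable from its history). *)
Fixpoint history (t : nat) : 'I_n -> seq bool :=
  match t with
  | 0 => fun _ => [::]
  | t'.+1 =>
      let h := history t' in
      let beeps v := bp_act P (id v) (inp v) (h v) in
      fun v => rcons (h v) (~~ beeps v && [exists u, adj v u && beeps u])
  end.

Definition output (t : nat) (v : 'I_n) : msgmap :=
  bp_out P (id v) (inp v) (history t v).
End Exec.

(* Input of node u: for each neighbour w, the message m u w, keyed by the ID of w. *)
Definition outbox n (adj : rel 'I_n) (id : 'I_n -> nat) (m : 'I_n -> 'I_n -> nat)
  (u : 'I_n) : msgmap :=
  fun x => if [pick w | adj u w && (id w == x)] is Some w then Some (m u w) else None.

(* What node v must learn: for each neighbour u, the pair (ID of u, m u v). *)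
Definition inbox n (adj : rel 'I_n) (id : 'I_n -> nat) (m : 'I_n -> 'I_n -> nat)
  (v : 'I_n) : msgmap :=
  fun x => if [pick u | adj v u && (id u == x)] is Some u then Some (m u v) else None.

Definition degree n (adj : rel 'I_n) (v : 'I_n) : nat := #|[pred u | adj v u]|.
Definition max_degree n (adj : rel 'I_n) : nat := \max_(v : 'I_n) degree adj v.

(* Main.v *)
Require Import Defs.
From mathcomp Require Import all_boot all_order.
From mathcomp Require Import all_algebra all_field.
From mathcomp Require Import zify ring.
Set Implicit Arguments. Unset Strict Implicit. Unset Printing Implicit Defensive.

(* Blocks are indexed by pairs (a, b) of elements of a finite field of size q ~ Delta*W;
   node x "owns" the blocks (a, p_x(a)) where p_x is a polynomial of degree < W encoding x.
   In a block, a listener v whose block is owned by a unique neighbour u (and not by v)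
   takes part in an ID tournament run by u; the winner receives m u v.  A counting
   argument shows every neighbour is served. *)

Section FamSec.
Import GRing.Theory.
Lemma family (qmin d : nat) :
  {q : nat & {inS : nat -> nat -> bool |
     [/\ qmin < q, q <= (maxn 1 qmin).*2,
      forall x, x < 2 ^ d -> q <= #|[set s : 'I_(q * q) | inS x s]| &
      forall x y, x < 2 ^ d -> y < 2 ^ d -> x != y ->
        #|[set s : 'I_(q * q) | inS x s && inS y s]| < d]}}.
Proof.
pose k := (trunc_log 2 qmin).+1.
have [F _ cardF] := pPrimePowerField (p := 2) (k := k) (isT : prime 2) (isT : 0 < k).
exists (2 ^ k).
pose e (i : nat) : F := nth (0%R : F) (enum F) i.
pose dft : d.-tuple F := [tuple of nseq d (0%R : F)].
pose enc (x : nat) : d.-tuple F := nth dft (enum {: d.-tuple F}) x.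
pose P (x : nat) : {poly F} := Poly (enc x).
exists (fun x s => e (s %% 2 ^ k) == horner (P x) (e (s %/ 2 ^ k))).
have q_gt1 : 1 < 2 ^ k by rewrite -{1}(expn0 2) ltn_exp2l.
have q_gt0 : 0 < 2 ^ k by apply: ltnW.
have sizeE : size (enum F) = 2 ^ k by rewrite -cardE cardF.
have e_inj : forall i j, i < 2 ^ k -> j < 2 ^ k -> e i = e j -> i = j.
  move=> i j hi hj hij; apply/eqP; rewrite -(nth_uniq (0%R : F) _ _ (enum_uniq F)) ?sizeE //.
  by apply/eqP.
have e_idx : forall a : F, index a (enum F) < 2 ^ k /\ e (index a (enum F)) = a.
  move=> a; split; first by rewrite -sizeE index_mem mem_enum.
  by rewrite /e nth_index // mem_enum.
split.
- by rewrite /k trunc_log_ltn.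
- rewrite /k; case: (posnP qmin) => [->|hq]; first by rewrite trunc_log0.
  by rewrite expnS (maxn_idPr hq) mul2n leq_double trunc_logP.
- move=> x hx.
  have glt : forall a : 'I_(2 ^ k), a * 2 ^ k + index ((P x).[e a])%R (enum F) < 2 ^ k * 2 ^ k.
    move=> a; have [h1 _] := e_idx ((P x).[e a])%R.
    have ha := ltn_ord a.
    apply: (@leq_trans (a * 2 ^ k + 2 ^ k)); first by rewrite ltn_add2l.
    by rewrite addnC -mulSn leq_mul2r ha orbT.
  pose g (a : 'I_(2 ^ k)) : 'I_(2 ^ k * 2 ^ k) := Ordinal (glt a).
  have gv : forall a, val (g a) = a * 2 ^ k + index ((P x).[e a])%R (enum F) by [].
  have gdiv : forall a : 'I_(2 ^ k), val (g a) %/ 2 ^ k = a.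
    move=> a; have [h1 _] := e_idx ((P x).[e a])%R.
    by rewrite gv divnMDl // divn_small // addn0.
  have gmod : forall a : 'I_(2 ^ k), val (g a) %% 2 ^ k = index ((P x).[e a])%R (enum F).
    move=> a; have [h1 _] := e_idx ((P x).[e a])%R.
    by rewrite gv modnMDl modn_small.
  rewrite -{1}(card_ord (2 ^ k)) -(card_imset _ (f := g)).
    apply: subset_leq_card; apply/subsetP => s /imsetP [a _ ->].
    by rewrite inE gmod gdiv; have [_ ->] := e_idx ((P x).[e a])%R.
  move=> a b hab; have := congr1 (fun s : 'I_(2 ^ k * 2 ^ k) => val s %/ 2 ^ k) hab.
  by rewrite /= !gdiv => h; apply: val_inj.
- move=> x y hx hy hxy.
  have cardT : 2 ^ d <= #|{: d.-tuple F}|.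
    rewrite card_tuple cardF; case: (posnP d) => [->|dp]; [by [] | rewrite leq_exp2r //].
  have enc_inj : enc x != enc y.
    apply: contra hxy => /eqP h; apply/eqP.
    have hs : size (enum {: d.-tuple F}) = #|{: d.-tuple F}| by rewrite -cardE.
    apply/eqP; rewrite -(nth_uniq dft (s := enum {: d.-tuple F})) ?enum_uniq ?hs ?(leq_trans _ cardT) //.
    by apply/eqP.
  have Pneq : (P x - P y)%R != 0%R.
    rewrite GRing.subr_eq0; apply: contra enc_inj => /eqP h.
    apply/eqP/val_inj/(eq_from_nth (x0 := 0%R)); first by rewrite !size_tuple.
    move=> i _; have := congr1 (fun p : {poly F} => (p`_i)%R) h; by rewrite /P /= !coef_Poly.
  have Psz : size ((P x - P y)%R) <= d.
    apply: leq_trans (size_polyD _ _) _; rewrite size_polyN geq_max.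
    by rewrite !(leq_trans (size_Poly _)) ?size_tuple.
  pose R := [set a : F | root ((P x - P y)%R) a].
  have cR : #|R| < d.
    apply: leq_trans Psz; rewrite cardE; apply: max_poly_roots => //.
      by apply/allP => a; rewrite mem_enum inE.
    exact: enum_uniq.
  apply: leq_ltn_trans cR.
  pose h (s : 'I_(2 ^ k * 2 ^ k)) : F := e (s %/ 2 ^ k).
  rewrite -(card_in_imset (f := h)).
    apply: subset_leq_card; apply/subsetP => a /imsetP [s].
    rewrite inE => /andP [/eqP h1 /eqP h2] ->.
    by rewrite inE /root hornerD hornerN -h1 -h2 subrr.
  move=> s1 s2; rewrite !inE => /andP [/eqP h1 _] /andP [/eqP h2 _] /= h12.
  have hd : s1 %/ 2 ^ k = s2 %/ 2 ^ k.
    apply: e_inj h12.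
    - by rewrite ltn_divLR // ltn_ord.
    - by rewrite ltn_divLR // ltn_ord.
  have hm : s1 %% 2 ^ k = s2 %% 2 ^ k.
    apply: e_inj; rewrite ?ltn_mod //.
    by rewrite /h in h12; rewrite h1 h2 hd.
  by apply: val_inj; rewrite /= (divn_eq s1 (2 ^ k)) (divn_eq s2 (2 ^ k)) hd hm.
Qed.
End FamSec.


Lemma div2S (x k : nat) : x %/ 2 ^ k = (x %/ 2 ^ k.+1).*2 + odd (x %/ 2 ^ k).
Proof.
by rewrite expnSr divnMA divn2 addnC odd_double_half.
Qed.

Lemma tournament (V : finType) (C : pred V) (key : V -> nat) (al : nat -> V -> bool)
  (dec : nat -> nat) (K : nat)
  (hkey : forall w, C w -> key w < 2 ^ K)
  (h0 : forall w, al 0 w = C w)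
  (hS : forall i w, i < K -> al i.+1 w = al i w && ~~ (~~ odd (key w %/ 2 ^ (K - i.+1))
          && [exists w', al i w' && odd (key w' %/ 2 ^ (K - i.+1))]))
  (hd0 : dec 0 = 0)
  (hdS : forall i, i < K -> dec i.+1 = (dec i).*2 +
          [exists w', al i w' && odd (key w' %/ 2 ^ (K - i.+1))]) :
  forall w, (al K w = C w && [forall w', C w' ==> (key w' <= key w)]) /\
            (al K w -> dec K = key w).
Proof.
pose pre i x := x %/ 2 ^ (K - i).
suff inv : forall i, i <= K -> forall w,
    (al i w = C w && [forall w', C w' ==> (pre i (key w') <= pre i (key w))]) /\
    (al i w -> dec i = pre i (key w)).
  move=> w; have [h1 h2] := inv K (leqnn K) w.
  have e : forall x, pre K x = x by move=> x; rewrite /pre subnn expn0 divn1.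
  split; last by move=> x; rewrite h2 // e.
  rewrite h1; congr (_ && _); apply: eq_forallb => w'; by rewrite !e.
elim=> [_ | i IH hi] w.
  rewrite h0 hd0; case Cw: (C w) => //=; split; last move=> _.
  - by apply/esym/forallP => w'; apply/implyP => Cw'; rewrite /pre subn0 !divn_small ?hkey.
  - by rewrite /pre subn0 divn_small ?hkey.
have hiK : i < K by [].
have preS : forall x, pre i.+1 x = (pre i x).*2 + odd (x %/ 2 ^ (K - i.+1)).
  move=> x; rewrite /pre {1}(div2S _ (K - i.+1)); have -> : (K - i.+1).+1 = K - i by lia. by [].
set b := fun x => odd (x %/ 2 ^ (K - i.+1)).
set echo := [exists w', al i w' && b (key w')].
have IHi := IH (ltnW hi).
have alS : forall w, al i.+1 w = al i w && ~~ (~~ b (key w) && echo) by move=> x; rewrite hS.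
have maxi : forall w, al i w -> forall w', C w' -> pre i (key w') <= pre i (key w).
  move=> x; rewrite (proj1 (IHi x)) => /andP [_ /forallP h] w' Cw'.
  by have := h w'; rewrite Cw'.
have alI : forall w, C w -> (forall w', C w' -> pre i (key w') <= pre i (key w)) -> al i w.
  move=> x Cx hx; rewrite (proj1 (IHi x)) Cx /=; apply/forallP => w'.
  by apply/implyP => /hx.
have alC : forall w, al i w -> C w.
  by move=> x; rewrite (proj1 (IHi x)) => /andP [].
split.
- apply/idP/idP.
  + rewrite alS => /andP [ali hb].
    rewrite (alC _ ali) /=; apply/forallP => w'; apply/implyP => Cw'.
    rewrite !preS.
    have hle := maxi _ ali w' Cw'.
    case: (ltngtP (pre i (key w')) (pre i (key w))) => [hlt | hgt | heq].
    * case: (b (key w')) (b (key w)); rewrite /b; case: odd; case: odd; lia.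
    * lia.
    * have aliw' : al i w' by apply: alI => // w'' Cw''; rewrite heq; apply: maxi.
      move: hb; rewrite /echo; case hbw: (b (key w)) => /=.
      -- rewrite heq -/(b (key w')) -/(b (key w)) hbw; case: (b (key w')); lia.
      -- move=> hne; have : ~~ (al i w' && b (key w')).
           by apply: contra hne => h; apply/existsP; exists w'.
         rewrite aliw' /= => /negbTE hbw'.
         rewrite heq -/(b (key w')) -/(b (key w)) hbw hbw'; lia.
  + move=> /andP [Cw /forallP hmax].
    have hm : forall w', C w' -> pre i.+1 (key w') <= pre i.+1 (key w).
      by move=> w' Cw'; have := hmax w'; rewrite Cw'.
    have ali : al i w.
      apply: alI => // w' Cw'; have := hm w' Cw'; rewrite !preS.
      case: odd; case: odd; lia.
    rewrite alS ali /=; apply/negP => /andP [hb /existsP [w' /andP [aliw' bw']]].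
    have e1 := maxi _ ali w' (alC _ aliw').
    have e2 := maxi _ aliw' w Cw.
    have := hm w' (alC _ aliw'); rewrite !preS -/(b (key w')) -/(b (key w)) bw' (negbTE hb).
    lia.
- rewrite alS => /andP [ali hb].
  rewrite hdS // (proj2 (IHi w) ali) preS -/(b (key w)).
  congr (_ + nat_of_bool _); rewrite /echo.
  case hbw: (b (key w)).
  + by apply/existsP; exists w; rewrite ali; exact: hbw.
  + by move: hb; rewrite hbw /= => /negbTE; rewrite /echo.
Qed.

Module PD.
Section Proto.
Variables (W B L : nat) (inS : nat -> nat -> bool).

Definition blen := W.*2 + B.
Definition bitW (x i : nat) := odd (x %/ 2 ^ (W - i.+1)).
Definition bitB (x r : nat) := odd (x %/ 2 ^ (B - r.+1)).

Definition owner (x : nat) (inp : msgmap) (s : nat) : option nat :=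
  if inS x s then None else
  if [pick z : 'I_(2 ^ W) | (inp z != None) && inS z s] is Some z then
    (if [forall z' : 'I_(2 ^ W), ((inp z' != None) && inS z' s) ==> (z' == z)]
     then Some (val z) else None)
  else None.

Fixpoint surv (x : nat) (f : nat -> bool) (s i : nat) : bool :=
  if i is i'.+1 then surv x f s i' && ~~ (~~ bitW x i' && f (s * blen + i'.*2.+1))
  else true.

Definition won x inp f s y := (owner x inp s == Some y) && surv x f s W.
Definition served x inp f s y := has (fun s' => won x inp f s' y) (iota 0 s).
Definition contend x inp f s :=
  if owner x inp s is Some y then ~~ served x inp f s y else false.

Fixpoint dec (f : nat -> bool) (s i : nat) : nat :=
  if i is i'.+1 then (dec f s i').*2 + f (s * blen + i'.*2) else 0.
Definition cmsg (inp : msgmap) f s := if inp (dec f s W) is Some m then m else 0.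
Fixpoint rdec (f : nat -> bool) (s r : nat) : nat :=
  if r is r'.+1 then (rdec f s r').*2 + f (s * blen + W.*2 + r') else 0.

Definition act x inp (f : nat -> bool) t :=
  let s := t %/ blen in let j := t %% blen in
  if inS x s then
    (if j < W.*2 then odd j && f t.-1 else bitB (cmsg inp f s) (j - W.*2))
  else (j < W.*2) && ~~ odd j && contend x inp f s && surv x f s j./2 && bitW x j./2.

Definition outp x inp (f : nat -> bool) : msgmap := fun y =>
  if inp y is Some _ then
    let i := find (fun s => won x inp f s y) (iota 0 L) in
    if i < L then Some (rdec f i B) else None
  else None.

Definition proto := BeepProtocol (fun x inp h => act x inp (nth false h) (size h))
                                 (fun x inp h => outp x inp (nth false h)).

Section Ext.
Variables (f g : nat -> bool).

Lemma surv_ext x s i : (forall k, k < s * blen + i.*2 -> f k = g k) ->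
  surv x f s i = surv x g s i.
Proof.
elim: i => [//|i IH] h /=; rewrite IH ?h //; last by move=> k hk; apply: h; lia.
lia.
Qed.

Lemma won_ext x inp s y : (forall k, k < s.+1 * blen -> f k = g k) ->
  won x inp f s y = won x inp g s y.
Proof.
move=> h; rewrite /won surv_ext // => k hk; apply: h; rewrite mulSn.
have : W.*2 <= blen := leq_addr _ _; lia.
Qed.

Lemma served_ext x inp s y : (forall k, k < s * blen -> f k = g k) ->
  served x inp f s y = served x inp g s y.
Proof.
move=> h; rewrite /served; apply: eq_in_has => s'; rewrite mem_iota add0n => /andP [_ hs'].
apply: won_ext => k hk; apply: h; apply: leq_trans hk _; by rewrite leq_mul2r hs' orbT.
Qed.

Lemma contend_ext x inp s : (forall k, k < s * blen -> f k = g k) ->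
  contend x inp f s = contend x inp g s.
Proof. by move=> h; rewrite /contend; case: owner => // y; rewrite served_ext. Qed.

Lemma dec_ext s i : (forall k, k < s * blen + i.*2 -> f k = g k) -> dec f s i = dec g s i.
Proof.
elim: i => [//|i IH] h /=; rewrite IH ?h //; last by move=> k hk; apply: h; lia.
lia.
Qed.

Lemma cmsg_ext inp s : (forall k, k < s * blen + W.*2 -> f k = g k) ->
  cmsg inp f s = cmsg inp g s.
Proof. by move=> h; rewrite /cmsg dec_ext. Qed.

Lemma rdec_ext s r : (forall k, k < s * blen + W.*2 + r -> f k = g k) ->
  rdec f s r = rdec g s r.
Proof.
elim: r => [//|r IH] h /=; rewrite IH ?h //; last by move=> k hk; apply: h; lia.
lia.
Qed.

Lemma act_ext x inp t : 0 < blen -> (forall k, k < t -> f k = g k) ->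
  act x inp f t = act x inp g t.
Proof.
move=> hb h; rewrite /act.
have ht := divn_eq t blen; have hj := ltn_mod t blen; rewrite hb in hj.
set s := t %/ blen in ht *; set j := t %% blen in ht hj *.
case: inS.
- case: ifP => hjW.
  + case oj: (odd j) => //=; apply: h; have : 0 < j by case: (j) oj.
    lia.
  + rewrite cmsg_ext // => k hk; apply: h; lia.
- rewrite contend_ext; last by move=> k hk; apply: h; lia.
  rewrite surv_ext // => k hk; apply: h; rewrite ht.
  have : (j./2).*2 <= j by rewrite -{2}(odd_double_half j); lia.
  lia.
Qed.

Lemma outp_ext x inp : (forall k, k < L * blen -> f k = g k) ->
  outp x inp f =1 outp x inp g.
Proof.
move=> h y; rewrite /outp; case: (inp y) => // _.
have e : forall s, s < L -> won x inp f s y = won x inp g s y.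
  move=> s hs; apply: won_ext => k hk; apply: h; apply: leq_trans hk _.
  by rewrite leq_mul2r hs orbT.
have -> : find (fun s => won x inp f s y) (iota 0 L) = find (fun s => won x inp g s y) (iota 0 L).
  by apply: eq_in_find => s; rewrite mem_iota add0n => /andP [_]; apply: e.
case: ifP => // hl; congr Some; apply: rdec_ext => k hk; apply: h.
set i := find _ _ in hl hk *.
have h1 : i.+1 * blen <= L * blen by rewrite leq_mul2r hl orbT.
rewrite mulSn in h1; have eb : blen = W.*2 + B by [].
lia.
Qed.
End Ext.
End Proto.
End PD.


Lemma card_cover_le (T I : finType) (A G : {set T}) (Q : {set I}) (Cw : I -> {set T}) :
  (forall s, s \in A -> s \notin G -> exists2 w, w \in Q & s \in Cw w) ->
  #|A| <= #|G| + \sum_(w in Q) #|Cw w|.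
Proof.
move=> hcov.
rewrite -!sum1_card.
have e : \sum_(w in Q) #|Cw w| = \sum_(w in Q) \sum_s (s \in Cw w : nat).
  apply: eq_bigr => w _; rewrite -sum1_card big_mkcond /=; apply: eq_bigr => s _.
  by case: (s \in Cw w).
rewrite e big_mkcond /= [X in _ <= X + _]big_mkcond /= (exchange_big_dep predT) //=.
rewrite -big_split /=; apply: leq_sum => s _.
case hA: (s \in A) => //; case hG: (s \in G) => //=.
have [w wQ ws] := hcov s hA (negbT hG).
rewrite (bigD1 w) //=; move: ws; case: (s \in Cw w) => // _ /=; lia.
Qed.

Section Exec.
Variables (W B L : nat) (inS : nat -> nat -> bool).
Variables (n : nat) (adj : rel 'I_n) (id : 'I_n -> nat) (m : 'I_n -> 'I_n -> nat).
Hypotheses (Wpos : 0 < W) (sym : symmetric adj) (irr : irreflexive adj)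
  (idinj : injective id) (idlt : forall v, id v < 2 ^ W)
  (mlt : forall u v, adj u v -> m u v < 2 ^ B).

Local Notation blen := (PD.blen W B).
Local Notation bitW := (PD.bitW W).
Local Notation bitB := (PD.bitB B).
Local Notation owner := (PD.owner W inS).
Local Notation surv := (PD.surv W B).
Local Notation won := (PD.won W B inS).
Local Notation served := (PD.served W B inS).
Local Notation contend := (PD.contend W B inS).
Local Notation dec := (PD.dec W B).
Local Notation cmsg := (PD.cmsg W B).
Local Notation rdec := (PD.rdec W B).
Local Notation act := (PD.act W B inS).
Local Notation outp := (PD.outp W B L inS).
Local Notation P := (PD.proto W B L inS).
Local Notation inp := (outbox adj id m).
Local Notation hist := (history adj id inp P).

Lemma blen_pos : 0 < blen.
Proof. by rewrite /PD.blen addn_gt0 double_gt0 Wpos. Qed.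

Definition H v i := nth false (hist i.+1 v) i.

Lemma size_hist t v : size (hist t v) = t.
Proof. by elim: t v => //= t IH v; rewrite size_rcons IH. Qed.

Lemma nth_hist t v i : i < t -> nth false (hist t v) i = H v i.
Proof.
elim: t => // t IH; rewrite ltnS leq_eqVlt => /orP [/eqP -> // | hi].
by rewrite /= nth_rcons size_hist hi IH.
Qed.

Definition A t v := act (id v) (inp v) (H v) t.

Lemma H_step t v : H v t = ~~ A t v && [exists u, adj v u && A t u].
Proof.
have e : forall w, act (id w) (inp w) (nth false (hist t w)) t = A t w.
  move=> w; apply: PD.act_ext; first exact: blen_pos.
  by move=> k hk; apply: nth_hist.
rewrite /H /= nth_rcons size_hist ltnn eqxx /= e.
congr (_ && _); apply: eq_existsb => w; by rewrite size_hist e.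
Qed.

Lemma divblk s j : j < blen -> (s * blen + j) %/ blen = s /\ (s * blen + j) %% blen = j.
Proof.
move=> hj; have hb := blen_pos.
by rewrite divnMDl // modnMDl divn_small // modn_small // addn0.
Qed.

Lemma A_center s j w : j < blen -> inS (id w) s ->
  A (s * blen + j) w = if j < W.*2 then odd j && H w (s * blen + j).-1
                       else bitB (cmsg (inp w) (H w) s) (j - W.*2).
Proof. by move=> hj hw; rewrite /A /PD.act; have [-> ->] := divblk s hj; rewrite hw. Qed.

Lemma A_leaf s j w : j < blen -> ~~ inS (id w) s ->
  A (s * blen + j) w = (j < W.*2) && ~~ odd j && contend (id w) (inp w) (H w) s
                        && surv (id w) (H w) s j./2 && bitW (id w) j./2.
Proof.
by move=> hj hw; rewrite /A /PD.act; have [-> ->] := divblk s hj; rewrite (negbTE hw).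
Qed.

Lemma inp_none v z : (inp v z != None) = [exists w, adj v w && (id w == z)].
Proof.
rewrite /outbox; case: pickP => [w hw | h] /=.
  by apply/esym/existsP; exists w.
by apply/esym/negbTE/existsP => [[w]]; rewrite h.
Qed.

Lemma inp_id v w : adj v w -> inp v (id w) = Some (m v w).
Proof.
move=> a; rewrite /outbox; case: pickP => [w' /andP [_ /eqP e] | h].
  by rewrite (idinj e).
by have := h w; rewrite a eqxx.
Qed.

Lemma inbox_id v w : adj v w -> inbox adj id m v (id w) = Some (m w v).
Proof.
move=> a; rewrite /inbox; case: pickP => [w' /andP [_ /eqP e] | h].
  by rewrite (idinj e).
by have := h w; rewrite a eqxx.
Qed.

Lemma inbox_none v z : (forall w, adj v w -> id w != z) -> inbox adj id m v z = None.
Proof.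
move=> h; rewrite /inbox; case: pickP => // w /andP [a /eqP e].
by have := h w a; rewrite e eqxx.
Qed.

Lemma ownerP1 v s y : owner (id v) (inp v) s = Some y ->
  [/\ ~~ inS (id v) s, exists2 u, adj v u & id u = y, inS y s &
      forall w, adj v w -> inS (id w) s -> id w = y].
Proof.
rewrite /PD.owner; case: ifP => // hv.
case: pickP => // z /andP [hz hs]; case: ifP => // /forallP hall [<-].
split => //.
- by move: hz; rewrite inp_none => /existsP [u /andP [a /eqP e]]; exists u.
- move=> w a hw; have := hall (Ordinal (idlt w)); rewrite /= hw andbT inp_none.
  have -> : [exists w', adj v w' && (id w' == id w)] by apply/existsP; exists w; rewrite a eqxx.
  by move=> /eqP /(congr1 val).
Qed.

Lemma ownerP2 v u s : ~~ inS (id v) s -> adj v u -> inS (id u) s ->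
  (forall w, adj v w -> inS (id w) s -> w = u) -> owner (id v) (inp v) s = Some (id u).
Proof.
move=> hv a hu huniq; rewrite /PD.owner (negbTE hv).
have key : forall z : 'I_(2 ^ W), (inp v z != None) && inS z s -> val z = id u.
  move=> z /andP [hz hs]; move: hz; rewrite inp_none => /existsP [w /andP [aw /eqP e]].
  have hw : inS (id w) s by rewrite e.
  rewrite -(huniq w aw hw); exact: (esym e).
case: pickP => [z hz | h]; last first.
  have := h (Ordinal (idlt u)); rewrite /= hu andbT inp_none.
  by have -> : [exists w', adj v w' && (id w' == id u)] by apply/existsP; exists u; rewrite a eqxx.
case: ifP => [_ | /negP []]; first by rewrite (key z hz).
apply/forallP => z'; apply/implyP => hz'; apply/eqP/val_inj; by rewrite (key z hz) (key z' hz').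
Qed.

Lemma contend_owner w u s : contend (id w) (inp w) (H w) s -> adj u w -> inS (id u) s ->
  owner (id w) (inp w) s = Some (id u).
Proof.
rewrite /PD.contend; case e: (owner _ _ _) => [y|] // _ a hu.
have [_ _ _ hall] := ownerP1 e.
by rewrite (hall u) // sym.
Qed.

Lemma H_up s i u : i < W -> inS (id u) s ->
  H u (s * blen + i.*2) = [exists w, adj u w && contend (id w) (inp w) (H w) s
                                      && surv (id w) (H w) s i && bitW (id w) i].
Proof.
move=> hi hu.
have hj : i.*2 < blen by rewrite /PD.blen; apply: leq_trans (leq_addr _ _); rewrite ltn_double.
rewrite H_step A_center // ltn_double hi odd_double /=.
apply: eq_existsb => w; case hw: (inS (id w) s).
- rewrite A_center // ltn_double hi odd_double /= andbF.
  by rewrite /PD.contend /PD.owner hw /= !andbF.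
- by rewrite A_leaf ?hw // ltn_double hi odd_double doubleK /= !andbA.
Qed.

Lemma H_down s i v u : i < W -> owner (id v) (inp v) s = Some (id u) -> adj v u ->
  H v (s * blen + i.*2.+1) = H u (s * blen + i.*2).
Proof.
move=> hi ho a; have [hv _ hu hall] := ownerP1 ho.
have hj : i.*2.+1 < blen.
  rewrite /PD.blen; apply: leq_trans (leq_addr _ _); by rewrite -doubleS leq_double.
have hjW : i.*2.+1 < W.*2 by rewrite -doubleS leq_double.
rewrite H_step A_leaf // hjW /= odd_double /=.
apply/existsP/idP => [[w /andP [aw]] | hU].
- case hw: (inS (id w) s); last by rewrite A_leaf ?hw // hjW /= odd_double.
  rewrite A_center // hjW /= odd_double /= addnS /=.
  by have e := hall w aw hw; rewrite -(idinj e).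
- exists u; rewrite a A_center // hjW /= odd_double /= addnS /=; exact: hU.
Qed.

Lemma H_msg s r v u : r < B -> owner (id v) (inp v) s = Some (id u) -> adj v u ->
  H v (s * blen + W.*2 + r) = bitB (cmsg (inp u) (H u) s) r.
Proof.
move=> hr ho a; have [hv _ hu hall] := ownerP1 ho.
have hj : W.*2 + r < blen by rewrite /PD.blen ltn_add2l.
have hjW : (W.*2 + r < W.*2) = false by rewrite ltnNge leq_addr.
rewrite -addnA H_step A_leaf // hjW /=.
apply/existsP/idP => [[w /andP [aw]] | hU].
- case hw: (inS (id w) s); last by rewrite A_leaf ?hw // hjW.
  rewrite A_center // hjW addKn.
  by have e := hall w aw hw; rewrite -(idinj e).
- by exists u; rewrite a A_center // hjW addKn.
Qed.


Lemma tour_blk s u : inS (id u) s -> forall w,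
  let C := fun w => adj u w && contend (id w) (inp w) (H w) s in
  (C w && surv (id w) (H w) s W = C w && [forall w', C w' ==> (id w' <= id w)]) /\
  (C w && surv (id w) (H w) s W -> dec (H u) s W = id w).
Proof.
move=> hu w C.
pose al := fun i w => C w && surv (id w) (H w) s i.
have h1 : forall w, C w -> id w < 2 ^ W by move=> x _; apply: idlt.
have h2 : forall w, al 0 w = C w by move=> x; rewrite /al andbT.
have h3 : forall i w, i < W -> al i.+1 w = al i w && ~~ (~~ odd (id w %/ 2 ^ (W - i.+1))
          && [exists w', al i w' && odd (id w' %/ 2 ^ (W - i.+1))]).
  move=> i x hi; rewrite /al /=.
  case hC: (C x) => //=.
  case/andP: hC => a hc.
  have ho := contend_owner hc a hu.
  have a' : adj x u by rewrite sym.
  rewrite (H_down hi ho a') H_up //.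
have h4 : dec (H u) s 0 = 0 by [].
have h5 : forall i, i < W -> dec (H u) s i.+1 = (dec (H u) s i).*2 +
          [exists w', al i w' && odd (id w' %/ 2 ^ (W - i.+1))].
  move=> i hi /=; rewrite H_up //; congr (_ + nat_of_bool _).
exact: (tournament h1 h2 h3 h4 h5 w).
Qed.

Lemma tour_win s u w : inS (id u) s ->
  adj u w && contend (id w) (inp w) (H w) s ->
  (forall w', adj u w' && contend (id w') (inp w') (H w') s -> id w' <= id w) ->
  surv (id w) (H w) s W.
Proof.
move=> hu hC hmax; have [h1 _] := tour_blk hu w.
have : (adj u w && contend (id w) (inp w) (H w) s) && surv (id w) (H w) s W.
  rewrite h1 hC /=; apply/forallP => w'; apply/implyP => /hmax //.
by case/andP.
Qed.

Lemma tour_dec s u w : inS (id u) s ->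
  adj u w && contend (id w) (inp w) (H w) s -> surv (id w) (H w) s W ->
  dec (H u) s W = id w.
Proof.
move=> hu hC hs; have [_ h2] := tour_blk hu w.
by apply: h2; rewrite /= hC hs.
Qed.

Lemma rdec_bits (f : nat -> bool) s x : x < 2 ^ B ->
  (forall r, r < B -> f (s * blen + W.*2 + r) = bitB x r) -> rdec f s B = x.
Proof.
move=> hx hf.
suff h : forall r, r <= B -> rdec f s r = x %/ 2 ^ (B - r).
  by rewrite h // subnn expn0 divn1.
elim=> [_ | r IH hr] /=; first by rewrite subn0 divn_small.
rewrite IH ?(ltnW hr) // hf // /PD.bitB.
rewrite [in RHS](div2S _ (B - r.+1)); have -> : (B - r.+1).+1 = B - r by lia.
by [].
Qed.

Lemma win_msg s u v : inS (id u) s -> adj u v -> contend (id v) (inp v) (H v) s ->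
  surv (id v) (H v) s W -> rdec (H v) s B = m u v.
Proof.
move=> hu a hc hs.
have hd := tour_dec hu (introT andP (conj a hc)) hs.
have ho := contend_owner hc a hu.
have a' : adj v u by rewrite sym.
apply: rdec_bits; first exact: mlt.
move=> r hr; rewrite (H_msg hr ho a').
by rewrite /PD.cmsg hd inp_id.
Qed.

Lemma no_rewin w u (s1 s2 : nat) : s1 < s2 -> adj u w ->
  inS (id u) s1 -> inS (id u) s2 ->
  contend (id w) (inp w) (H w) s1 -> surv (id w) (H w) s1 W ->
  contend (id w) (inp w) (H w) s2 -> False.
Proof.
move=> hlt a hu1 hu2 hc1 hs1 hc2.
have ho1 := contend_owner hc1 a hu1.
have ho2 := contend_owner hc2 a hu2.
move: hc2; rewrite /PD.contend ho2 => /negP; apply.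
apply/hasP; exists s1; first by rewrite mem_iota add0n hlt.
by rewrite /PD.won ho1 eqxx hs1.
Qed.

Lemma eventually_won v u : adj v u ->
  max_degree adj <= #|[set s : 'I_L | owner (id v) (inp v) s == Some (id u)]| ->
  has (fun s => won (id v) (inp v) (H v) s (id u)) (iota 0 L).
Proof.
move=> a hK; apply/negPn/negP => hno.
set U := [set s : 'I_L | _] in hK.
have nserv : forall s, s <= L -> served (id v) (inp v) (H v) s (id u) = false.
  move=> s hs; apply/negbTE; apply: contra hno => /hasP [s' hs' hw].
  apply/hasP; exists s' => //; move: hs'; rewrite !mem_iota !add0n => /andP [_ h].
  exact: leq_trans h hs.
have contU : forall s : 'I_L, s \in U -> contend (id v) (inp v) (H v) s.
  by move=> s; rewrite inE => /eqP ho; rewrite /PD.contend ho nserv // ltnW.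
have inU : forall s : 'I_L, s \in U -> inS (id u) s.
  by move=> s; rewrite inE => /eqP ho; have [_ _ h _] := ownerP1 ho.
have au : adj u v by rewrite sym.
pose wf (s : 'I_L) : 'I_n :=
  [arg max_(w > v | adj u w && contend (id w) (inp w) (H w) s) id w].
have wfP : forall s : 'I_L, s \in U ->
    [/\ adj u (wf s) && contend (id (wf s)) (inp (wf s)) (H (wf s)) s,
        surv (id (wf s)) (H (wf s)) s W & wf s != v].
  move=> s hs; have Cv : adj u v && contend (id v) (inp v) (H v) s by rewrite au contU.
  rewrite /wf; case: arg_maxnP => // w Cw hmax.
  have hsv := tour_win (inU s hs) Cw hmax.
  split => //; apply/eqP => e; rewrite e in hsv; move/negP: hno; apply.
  apply/hasP; exists (val s); first by rewrite mem_iota add0n ltn_ord.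
  by move: hs; rewrite inE /PD.won hsv andbT.
have winj : {in U &, injective wf}.
  move=> s1 s2 h1 h2 e.
  have [hC1 hs1 _] := wfP s1 h1; have [hC2 hs2 _] := wfP s2 h2.
  case/andP: hC1 => a1 c1; case/andP: hC2 => a2 c2.
  case: (ltngtP s1 s2) => [lt|gt|eq]; last exact: val_inj.
  - exfalso; apply: (no_rewin lt a1 (inU s1 h1) (inU s2 h2) c1 hs1); by rewrite e.
  - exfalso; apply: (no_rewin gt a2 (inU s2 h2) (inU s1 h1) c2 hs2); by rewrite -e.
have card1 : #|U| <= #|[set w | adj u w & w != v]|.
  rewrite -(card_in_imset winj); apply: subset_leq_card; apply/subsetP => w.
  move=> /imsetP [s hs ->]; have [hC _ hne] := wfP s hs.
  by rewrite inE hne andbT; case/andP: hC.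
have card2 : #|[set w | adj u w & w != v]| < degree adj u.
  rewrite /degree [X in _ < X](cardD1 v) inE au /= ltnS.
  apply: subset_leq_card; apply/subsetP => w; rewrite !inE => /andP [h1 h2].
  by rewrite h1 h2.
have card3 : degree adj u <= max_degree adj.
  by rewrite /max_degree; apply: (@leq_bigmax _ (fun w => degree adj w) u).
have := leq_trans hK card1; have := leq_trans card2 card3; lia.
Qed.

Lemma output_ok v :
  (forall u, adj v u ->
     max_degree adj <= #|[set s : 'I_L | owner (id v) (inp v) s == Some (id u)]|) ->
  output adj id inp P (L * blen) v =1 inbox adj id m v.
Proof.
move=> hK x.
have -> : output adj id inp P (L * blen) v x = outp (id v) (inp v) (H v) x.
  by rewrite /output /=; apply: PD.outp_ext => k hk; apply: nth_hist.
case: (boolP [exists u, adj v u && (id u == x)]) => [/existsP [u /andP [a /eqP <-]] | hn].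
- rewrite inbox_id // /PD.outp inp_id //.
  have hw := eventually_won a (hK u a).
  set i := find _ _.
  have hi : i < L by rewrite -[X in _ < X](size_iota 0 L) -has_find.
  rewrite hi; congr Some.
  have wi : won (id v) (inp v) (H v) i (id u).
    by have := nth_find 0 hw; rewrite nth_iota.
  have ns : served (id v) (inp v) (H v) i (id u) = false.
    apply/negbTE/hasP => [[s' hs' hw']]; move: hs'; rewrite mem_iota add0n => /andP [_ hs'].
    have := before_find 0 hs'; rewrite nth_iota ?add0n ?hw' //; exact: ltn_trans hs' hi.
  case/andP: wi => /eqP ho hsv.
  have [_ _ hu _] := ownerP1 ho.
  apply: win_msg => //; first by rewrite sym.
  by rewrite /PD.contend ho ns.
- have hnone : inp v x = None.
    by apply/eqP; move: hn; rewrite -inp_none negbK.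
  rewrite /PD.outp hnone inbox_none // => w a; apply: contra hn => /eqP e.
  by apply/existsP; exists w; rewrite a e eqxx.
Qed.

Lemma clean_count v u (q : nat) :
  (forall x, x < 2 ^ W -> q <= #|[set s : 'I_L | inS x s]|) ->
  (forall x y, x < 2 ^ W -> y < 2 ^ W -> x != y ->
     #|[set s : 'I_L | inS x s && inS y s]| < W) ->
  max_degree adj * W < q -> adj v u ->
  max_degree adj <= #|[set s : 'I_L | owner (id v) (inp v) s == Some (id u)]|.
Proof.
move=> hS1 hS2 hq a.
set D := max_degree adj.
have uv : u != v by apply: contraTneq a => ->; rewrite irr.
set U := [set s : 'I_L | _].
pose G := [set s : 'I_L | inS (id u) s && ~~ inS (id v) s &&
            [forall w, (adj v w && (w != u)) ==> ~~ inS (id w) s]].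
have GU : #|G| <= #|U|.
  apply: subset_leq_card; apply/subsetP => s; rewrite !inE => /andP [/andP [hu hv] /forallP hf].
  rewrite (ownerP2 hv a hu) // => w aw hw; apply/eqP; apply: contraT => hne.
  by have := hf w; rewrite aw hne hw.
pose Q := [set w | (adj v w && (w != u)) || (w == v)].
pose Cw := fun w => [set s : 'I_L | inS (id u) s && inS (id w) s].
have cov := @card_cover_le _ _ [set s : 'I_L | inS (id u) s] G Q Cw.
have hcov : #|[set s : 'I_L | inS (id u) s]| <= #|G| + \sum_(w in Q) #|Cw w|.
  apply: cov => s; rewrite !inE => hu hG.
  case hv: (inS (id v) s).
    by exists v; rewrite !inE ?eqxx ?orbT // hu hv.
  move: hG; rewrite hu hv /= => /forallPn [w]; rewrite negb_imply negbK => /andP [/andP [aw hw] hws].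
  by exists w; rewrite !inE ?aw ?hw // hu hws.
have hsum : \sum_(w in Q) #|Cw w| <= #|Q| * W.-1.
  rewrite -sum_nat_const; apply: leq_sum => w; rewrite inE => hw.
  have hwu : w != u.
    by case/orP: hw => [/andP [_ ->] // | /eqP ->]; rewrite eq_sym.
  rewrite -ltnS prednK //; apply: hS2; [exact: idlt | exact: idlt | ].
  by apply: contra hwu => /eqP /idinj ->.
have hQ : #|Q| <= D.
  pose g := fun w => if w == v then u else w.
  have ginj : {in Q &, injective g}.
    move=> w1 w2; rewrite !inE /g.
    case: (eqVneq w1 v) => [-> | h1]; case: (eqVneq w2 v) => [-> | h2] //=.
    - by move=> _; rewrite orbF => /andP [_ h] e; move: h; rewrite -e eqxx.
    - by move=> h _ e; move: h; rewrite orbF e eqxx andbF.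
  rewrite -(card_in_imset ginj).
  apply: (@leq_trans (degree adj v)); last first.
    by rewrite /D /max_degree; apply: (@leq_bigmax _ (fun w => degree adj w) v).
  apply: subset_leq_card; apply/subsetP => x /imsetP [w]; rewrite inE /g => hw ->.
  by case: (eqVneq w v) => [_ | h]; rewrite inE //=; move: hw; rewrite (negbTE h) orbF => /andP [].
have hu := hS1 (id u) (idlt u).
have hQW : #|Q| * W.-1 <= D * W.-1 by rewrite leq_mul2r hQ orbT.
have eDW : D * W.-1 + D = D * W by rewrite -mulnSr prednK.
lia.
Qed.
End Exec.


Lemma lg_gt0 x : 0 < lg x.
Proof. by []. Qed.

Theorem theorem6 (c b : nat) (hc : 1 <= c) :
  exists (C k : nat) (T : nat -> nat -> nat) (P : nat -> nat -> beep_protocol),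
    forall n Delta : nat,
      T n Delta <= C * Delta ^ 2 * (lg n) ^ k * lg Delta /\
      forall (adj : rel 'I_n) (id : 'I_n -> nat) (m : 'I_n -> 'I_n -> nat),
        symmetric adj -> irreflexive adj ->
        max_degree adj = Delta ->
        injective id -> (forall v, 1 <= id v <= n ^ c) ->
        (forall u v, adj u v -> m u v < 2 ^ (b * lg n)) ->
        forall v : 'I_n,
          output adj id (outbox adj id m) (P n Delta) (T n Delta) v
          =1 inbox adj id m v.
Proof.
pose Wf n := c * lg n.
pose Bf n := b * lg n.
pose fam n D := family (D * Wf n) (Wf n).
pose qf n D := projT1 (fam n D).
pose Sf n D := proj1_sig (projT2 (fam n D)).
pose Lf n D := if D == 0 then 0 else qf n D * qf n D.
exists (4 * c ^ 2 * (c.*2 + b)), 3, (fun n D => Lf n D * PD.blen (Wf n) (Bf n)),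
  (fun n D => PD.proto (Wf n) (Bf n) (Lf n D) (Sf n D)).
move=> n D.
have [hq1 hq2 hS1 hS2] := proj2_sig (projT2 (fam n D)).
rewrite -/(qf n D) -/(Sf n D) in hq1 hq2 hS1 hS2.
have W1 : 0 < Wf n by rewrite /Wf muln_gt0 hc.
split.
- rewrite /Lf; case: eqP => [-> | /eqP hD]; first by rewrite mul0n.
  have hDW : 0 < D * Wf n by rewrite muln_gt0 lt0n hD W1.
  rewrite (maxn_idPr hDW) in hq2.
  have hq : qf n D * qf n D <= (D * Wf n).*2 * (D * Wf n).*2 by apply: leq_mul.
  have hl : 0 < lg D := lg_gt0 D.
  rewrite /PD.blen /Wf /Bf in hq *.
  set q := qf n D in hq *; set l := lg n in hq *; set lD := lg D.
  apply: (leq_trans (leq_mul hq (leqnn _))).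
  have e : (D * (c * l)).*2 * (D * (c * l)).*2 * ((c * l).*2 + b * l) =
           4 * c ^ 2 * (c.*2 + b) * D ^ 2 * l ^ 3.
    rewrite -!mul2n !expnS !expn0 !muln1; ring.
  by rewrite e leq_pmulr.
- move=> adj id m sym irr hmax idinj idb mb v.
  have idlt : forall v, id v < 2 ^ Wf n.
    move=> w; have /andP [_ h] := idb w; apply: leq_ltn_trans h _.
    have hn : n < 2 ^ lg n by apply: trunc_log_ltn.
    rewrite /Wf mulnC expnM ltn_exp2r //; lia.
  apply: output_ok => //.
  move=> u a.
  have hD : D != 0.
    rewrite -hmax -lt0n; apply: (@leq_trans (degree adj v)).
      by rewrite /degree; apply/card_gt0P; exists u.
    by rewrite /max_degree; apply: (@leq_bigmax _ (fun w => degree adj w) v).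
  rewrite /Lf (negbTE hD).
  have hq1' : max_degree adj * Wf n < qf n D by rewrite hmax.
  have := @clean_count _ _ _ _ _ _ m W1 irr idinj idlt v u (qf n D) hS1 hS2 hq1' a.
  by rewrite hmax.
Qed.
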